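(* Let $\Gamma$ be a finitely generated group. If there exists a finite generating set $X$ of $\Gamma$ and a generic subset $S\subset \mathbb F_X$ such that $\Gamma$ has solvable Equality Problem on $S\times S$, then $\Gamma$ has solvable Word Problem.
   Context: For a finite generating set $X$ of $\Gamma$, $\mathbb F_X$ is the free group on $X$ (elements are freely reduced words) and $\pi:\mathbb F_X\to\Gamma$ the canonical epimorphism. $|\omega|$ is the length of $\omega\in\mathbb F_X$, and $B_n=\{\omega\in\mathbb F_X:|\omega|\le n\}$. A set $S\subset\mathbb F_X$ is negligible if $\lim_{n\to\infty}|S\cap B_n|/|B_n|=0$, and generic if its complement is negligible. $\Gamma$ has solvable Word Problem on $S\subset\mathbb F_X$ if there is a partial algorithm that halts at least on every $\omega\in S$ and, whenever it halts on input $\omega$, correctly decides whether $\pi(\omega)$ is trivial; $\Gamma$ has solvable Word Problem if it has solvable Word Problem on $\mathbb F_X$. $\Gamma$ has solvable Equality Problem on $T\subset\mathbb F_X\times\mathbb F_X$ if there is a partial algorithm that halts at least on every $(\omega_1,\omega_2)\in T$ and, whenever it halts, correctly decides whether $\pi(\omega_1)=\pi(\omega_2)$. *)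

(* Defs.v *)
From HB Require Import structures.
From mathcomp Require Import all_boot all_order all_algebra.
Set Implicit Arguments. Unset Strict Implicit. Unset Printing Implicit Defensive.
Import Order.TTheory GRing.Theory Num.Theory.

Record group := Group {
  gcar :> Type;
  gmul : gcar -> gcar -> gcar;
  ginv : gcar -> gcar;
  gone : gcar;
  gmulA : associative gmul;
  gmul1 : left_id gone gmul;
  gmulV : left_inverse gone ginv gmul }.

(* Letters of the alphabet X u X^-1, X = {x_0,...,x_{k-1}}:
   (i, false) is x_i, (i, true) is x_i^-1. Words are seq (letter k).   *)
Definition letter (k : nat) : finType := ('I_k * bool)%type.

(* freely reduced words = elements of the free group F_X *)
Fixpoint reduced k (w : seq (letter k)) : bool :=
  match w with
  | x :: ((y :: _) as w') => (~~ ((x.1 == y.1) && (x.2 != y.2))) && reduced w'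
  | _ => true
  end.

Definition gen_val (G : group) k (gen : 'I_k -> G) (x : letter k) : G :=
  if x.2 then ginv (gen x.1) else gen x.1.
Definition piw (G : group) k (gen : 'I_k -> G) (w : seq (letter k)) : G :=
  foldr (fun x acc => gmul (gen_val gen x) acc) (gone G) w.

Definition generating (G : group) k (gen : 'I_k -> G) : Prop :=
  injective gen /\ forall g : G, exists w : seq (letter k), piw gen w = g.

Fixpoint words_of_len k (n : nat) : seq (seq (letter k)) :=
  match n with
  | 0 => [:: [::]]
  | n.+1 => [seq x :: w | x <- enum (letter k), w <- words_of_len k n]
  end.

Definition ball k (n : nat) : seq (seq (letter k)) :=
  [seq w <- flatten [seq words_of_len k j | j <- iota 0 n.+1] | reduced w].

Definition negligible k (S : pred (seq (letter k))) : Prop :=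
  forall eps : rat, (0 < eps)%R -> exists N : nat, forall n : nat, (N <= n)%N ->
    ((count S (ball k n))%:R / (size (ball k n))%:R < eps :> rat)%R.

Definition generic k (S : pred (seq (letter k))) : Prop :=
  negligible (predC S).

Inductive prog : Type :=
| PZero : prog
| PSucc : prog
| PProj : nat -> prog
| PComp : prog -> list prog -> prog
| PPrim : prog -> prog -> prog      (* primitive recursion on 1st arg *)
| PMu   : prog -> prog.             (* unbounded minimisation on 1st arg *)

Inductive peval : prog -> seq nat -> nat -> Prop :=
| ev_zero v : peval PZero v 0
| ev_succ x v : peval PSucc (x :: v) x.+1
| ev_proj i v : (i < size v)%N -> peval (PProj i) v (nth 0 v i)
| ev_comp f gs v ws y : pevals gs v ws -> peval f ws y -> peval (PComp f gs) v y
| ev_prim0 f g v y : peval f v y -> peval (PPrim f g) (0 :: v) y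
| ev_primS f g n v z y :
    peval (PPrim f g) (n :: v) z -> peval g (n :: z :: v) y ->
    peval (PPrim f g) (n.+1 :: v) y
| ev_mu f v n :
    peval f (n :: v) 0 ->
    (forall m, (m < n)%N -> exists y, y <> 0 /\ peval f (m :: v) y) ->
    peval (PMu f) v n
with pevals : list prog -> seq nat -> seq nat -> Prop :=
| evs_nil v : pevals nil v [::]
| evs_cons g gs v y ys : peval g v y -> pevals gs v ys -> pevals (g :: gs) v (y :: ys).

(* Encoding of words as natural numbers (bijective base 2k+1).          *)
Definition letter_code k (x : letter k) : nat := (2 * x.1 + x.2)%N.
Fixpoint word_code k (w : seq (letter k)) : nat :=
  match w with
  | [::] => 0
  | x :: w' => ((letter_code x).+1 + (2 * k).+1 * word_code w')%N
  end.

(* Output convention: 1 = "yes", 0 = "no". *)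

Definition WP_solvable_on (G : group) k (gen : 'I_k -> G)
    (S : pred (seq (letter k))) : Prop :=
  exists p : prog,
    (forall w, reduced w -> S w -> exists y, peval p [:: word_code w] y) /\
    (forall w y, reduced w -> peval p [:: word_code w] y ->
       (y = 1%N /\ piw gen w = gone G) \/ (y = 0%N /\ piw gen w <> gone G)).

Definition WP_solvable (G : group) k (gen : 'I_k -> G) : Prop :=
  WP_solvable_on gen predT.

Definition EqP_solvable_on (G : group) k (gen : 'I_k -> G)
    (T : seq (letter k) -> seq (letter k) -> bool) : Prop :=
  exists p : prog,
    (forall w1 w2, reduced w1 -> reduced w2 -> T w1 w2 ->
       exists y, peval p [:: word_code w1; word_code w2] y) /\
    (forall w1 w2 y, reduced w1 -> reduced w2 ->
       peval p [:: word_code w1; word_code w2] y ->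
       (y = 1%N /\ piw gen w1 = piw gen w2) \/ (y = 0%N /\ piw gen w1 <> piw gen w2)).

(* Main.v *)
Require Import Defs.
From mathcomp Require Import all_boot all_order all_algebra.
From mathcomp Require Import zify.
From Stdlib Require Import IndefiniteDescription.
Set Implicit Arguments. Unset Strict Implicit. Unset Printing Implicit Defensive.

Fixpoint iterp (n x : nat) (f : nat -> nat -> nat) : nat :=
  if n is n'.+1 then f n' (iterp n' x f) else x.

Inductive E : Type :=
| V : nat -> E
| Z : E
| S : E -> E
| L : E -> E -> E -> E
| Cm : E -> seq E -> E.

Fixpoint evalE (e : E) (v : seq nat) : nat :=
  match e with
  | V j => nth 0 v j
  | Z => 0
  | S e => (evalE e v).+1
  | L a b c => iterp (evalE a v) (evalE b v) (fun i z => evalE c [:: i, z & v])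
  | Cm f args => evalE f (map (fun a => evalE a v) args)
  end.

Fixpoint cE (n : nat) (e : E) : prog :=
  match e with
  | V j => if j < n then PProj j else PZero
  | Z => PZero
  | S e => PComp PSucc [:: cE n e]
  | L a b c => PComp (PPrim (cE n b) (cE n.+2 c)) (cE n a :: map PProj (iota 0 n))
  | Cm f args => PComp (cE (size args) f) (map (cE n) args)
  end.

Section EInd.
Variable P : E -> Prop.
Hypothesis HV : forall j, P (V j).
Hypothesis HZ : P Z.
Hypothesis HS : forall e, P e -> P (S e).
Hypothesis HL : forall a b c, P a -> P b -> P c -> P (L a b c).
Hypothesis HC : forall f args, P f -> foldr (fun a acc => P a /\ acc) True args -> P (Cm f args).
Fixpoint E_ind2 (e : E) : P e :=
  match e with
  | V j => HV j
  | Z => HZ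
  | S e => HS (E_ind2 e)
  | L a b c => HL (E_ind2 a) (E_ind2 b) (E_ind2 c)
  | Cm f args => HC (E_ind2 f)
      ((fix go (l : seq E) : foldr (fun a acc => P a /\ acc) True l :=
         match l with
         | nil => I
         | cons x l' => conj (E_ind2 x) (go l')
         end) args)
  end.
End EInd.

Lemma pevals_proj v i m : i + m <= size v ->
  pevals (map PProj (iota i m)) v [seq nth 0 v j | j <- iota i m].
Proof.
elim: m i => [|m IH] i H /=; first by constructor.
constructor; first by apply: ev_proj; lia.
by apply: IH; rewrite addSnnS.
Qed.

Lemma pevals_id v : pevals (map PProj (iota 0 (size v))) v v.
Proof.
have := @pevals_proj v 0 (size v) (leqnn _).
suff -> : [seq nth 0 v j | j <- iota 0 (size v)] = v by [].
by rewrite -[RHS](mkseq_nth 0).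
Qed.

Lemma cE_ok e : forall n v, size v = n -> peval (cE n e) v (evalE e v).
Proof.
elim/E_ind2: e.
- move=> j n v Hn /=. case: ifP => Hj.
  + by apply: ev_proj; rewrite Hn.
  + rewrite nth_default; first by apply: ev_zero.
    by rewrite Hn leqNgt Hj.
- move=> n v _; apply: ev_zero.
- move=> e IH n v Hn /=. apply: ev_comp. apply: evs_cons; [exact: IH|apply: evs_nil].
  apply: ev_succ.
- move=> a b c IHa IHb IHc n v Hn /=. apply: ev_comp.
  + apply: evs_cons; first exact: IHa. rewrite -Hn; exact: pevals_id.
  + elim: (evalE a v) => [|x IHx] /=.
    * apply: ev_prim0; exact: IHb.
    * apply: ev_primS; first exact IHx. by apply: IHc => /=; rewrite Hn.
- move=> f args IHf IHa n v Hn /=. apply: ev_comp; last first.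
  + by apply: IHf; rewrite size_map.
  + elim: args IHa {IHf} => [|a args IHl] /=; first by move=> _; apply: evs_nil.
    case=> IHa1 IHa2; apply: evs_cons; first by apply: IHa1.
    by apply: IHl.
Qed.

Definition addB := L (V 0) (V 1) (S (V 1)).
Definition add a b := Cm addB [:: a; b].
Definition predB := L (V 0) Z (V 0).
Definition predE a := Cm predB [:: a].
Definition subB := L (V 1) (V 0) (predE (V 1)).
Definition sub a b := Cm subB [:: a; b].
Definition mulB := L (V 0) Z (add (V 1) (V 3)).
Definition mulE a b := Cm mulB [:: a; b].
Definition sgB := L (V 0) Z (S Z).
Definition sgE a := Cm sgB [:: a].
Definition iszB := L (V 0) (S Z) Z.
Definition isz a := Cm iszB [:: a].
Definition eqEx a b := isz (add (sub a b) (sub b a)).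
Definition iteE c a b := add (mulE (sgE c) a) (mulE (isz c) b).
Fixpoint cst (c : nat) : E := if c is c'.+1 then S (cst c') else Z.

Lemma iterp_succ n x : iterp n x (fun _ z => z.+1) = n + x.
Proof. by elim: n => //= n ->. Qed.
Lemma iterp_add n b : iterp n 0 (fun _ z => z + b) = n * b.
Proof. by elim: n => //= n ->; rewrite mulSn addnC. Qed.
Lemma iterp_pred n x : iterp n x (fun _ z => z.-1) = x - n.
Proof. by elim: n => [|n /= ->]; rewrite ?subn0 ?subnS. Qed.
Lemma eq_iterp n x x' f f' : x = x' -> (forall i z, f i z = f' i z) ->
  iterp n x f = iterp n x' f'.
Proof. by move=> -> H; elim: n => //= n ->. Qed.

Section Ev.
Variable v : seq nat.
Lemma ev_add a b : evalE (add a b) v = evalE a v + evalE b v.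
Proof. exact: iterp_succ. Qed.
Lemma ev_pred a : evalE (predE a) v = (evalE a v).-1.
Proof. by rewrite /=; case: (evalE a v). Qed.
Lemma ev_sub a b : evalE (sub a b) v = evalE a v - evalE b v.
Proof.
rewrite /= -iterp_pred; apply: eq_iterp => // i z.
by rewrite /=; case: z.
Qed.
Lemma ev_mul a b : evalE (mulE a b) v = evalE a v * evalE b v.
Proof. rewrite /= -iterp_add; apply: eq_iterp => // i z; exact: iterp_succ. Qed.
Lemma ev_sg a : evalE (sgE a) v = (evalE a v != 0).
Proof. by rewrite /=; case: (evalE a v). Qed.
Lemma ev_isz a : evalE (isz a) v = (evalE a v == 0).
Proof. by rewrite /=; case: (evalE a v). Qed.
Lemma ev_eq a b : evalE (eqEx a b) v = (evalE a v == evalE b v).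
Proof.
rewrite /eqEx ev_isz ev_add !ev_sub.
case: (evalE a v == evalE b v) /eqP => H; apply/eqP; lia.
Qed.
Lemma ev_ite c a b : evalE (iteE c a b) v =
  if evalE c v != 0 then evalE a v else evalE b v.
Proof. rewrite /iteE ev_add !ev_mul ev_sg ev_isz; case: eqP => _ /=; lia. Qed.
Lemma ev_cst c : evalE (cst c) v = c.
Proof. by elim: c => //= c ->. Qed.
End Ev.

Definition mustep (j s c : nat) : nat := s + (s == 0) * ((c == 0) + (c == 1) * j.+2).
Definition mustepE j s c :=
  add s (mulE (isz s) (add (isz c) (mulE (eqEx c (S Z)) (S (S j))))).
Lemma ev_mustep v j s c : evalE (mustepE j s c) v = mustep (evalE j v) (evalE s v) (evalE c v).
Proof. by rewrite /mustepE /mustep ev_add ev_mul ev_isz ev_add ev_isz ev_mul ev_eq. Qed.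

Fixpoint fev (t : nat) (p : prog) (v : seq nat) {struct p} : nat :=
  match p with
  | PZero => 1
  | PSucc => if v is x :: _ then x.+2 else 0
  | PProj i => if i < size v then (nth 0 v i).+1 else 0
  | PComp f gs => let cs := map (fun g => fev t g v) gs in
      if all (fun c => c != 0) cs then fev t f (map predn cs) else 0
  | PPrim f g => if v is x :: v' then
      iterp x (fev t f v') (fun i z => if z is z'.+1 then fev t g [:: i, z' & v'] else 0)
      else 0
  | PMu f => (iterp t 0 (fun j s => mustep j s (fev t f (j :: v)))).-1
  end.

Section PInd.
Variable P : prog -> Prop.
Hypothesis HZ : P PZero.
Hypothesis HS : P PSucc.
Hypothesis HP : forall i, P (PProj i).
Hypothesis HC : forall f gs, P f -> foldr (fun a acc => P a /\ acc) True gs -> P (PComp f gs).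
Hypothesis HR : forall f g, P f -> P g -> P (PPrim f g).
Hypothesis HM : forall f, P f -> P (PMu f).
Fixpoint prog_ind2 (p : prog) : P p :=
  match p with
  | PZero => HZ
  | PSucc => HS
  | PProj i => HP i
  | PComp f gs => HC (prog_ind2 f)
      ((fix go (l : seq prog) : foldr (fun a acc => P a /\ acc) True l :=
         match l with
         | nil => I
         | cons x l' => conj (prog_ind2 x) (go l')
         end) gs)
  | PPrim f g => HR (prog_ind2 f) (prog_ind2 g)
  | PMu f => HM (prog_ind2 f)
  end.
End PInd.

Definition allposE (cs : seq E) : E := foldr (fun c acc => mulE (sgE c) acc) (S Z) cs.
Lemma ev_allpos v cs : evalE (allposE cs) v = all (fun c => evalE c v != 0) cs.
Proof.
elim: cs => [//|c cs IH].
have -> : allposE (c :: cs) = mulE (sgE c) (allposE cs) by [].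
by rewrite ev_mul ev_sg IH /=; case: (_ != 0); case: all.
Qed.

Fixpoint C (n : nat) (p : prog) {struct p} : E :=
  match p with
  | PZero => S Z
  | PSucc => if n is _.+1 then S (S (V 1)) else Z
  | PProj i => if i < n then S (V i.+1) else Z
  | PComp f gs => let cs := map (C n) gs in
      mulE (allposE cs) (Cm (C (size gs) f) (V 0 :: map predE cs))
  | PPrim f g => if n is n'.+1 then
      L (V 1) (Cm (C n' f) (V 0 :: map V (iota 2 n')))
        (mulE (sgE (V 1)) (Cm (C n.+1 g) [:: V 2, V 0, predE (V 1) & map V (iota 4 n')]))
      else Z
  | PMu f => predE (L (V 0) Z (mustepE (V 0) (V 1) (Cm (C n.+1 f) [:: V 2, V 0 & map V (iota 3 n)])))
  end.

Lemma map_nth_iota (l w : seq nat) :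
  [seq evalE a (l ++ w) | a <- map V (iota (size l) (size w))] = w.
Proof.
rewrite -map_comp /=.
elim: w l => [//|x w IH] l /=.
rewrite nth_cat ltnn subnn /=; congr (_ :: _).
by rewrite -cat_rcons -[in RHS](IH (rcons l x)) size_rcons.
Qed.

Lemma ev_L a b c v : evalE (L a b c) v = iterp (evalE a v) (evalE b v) (fun i z => evalE c [:: i, z & v]).
Proof. by []. Qed.
Lemma ev_Cm f args v : evalE (Cm f args) v = evalE f (map (fun a => evalE a v) args).
Proof. by []. Qed.

Lemma C_ok p : forall n t v, size v = n -> evalE (C n p) (t :: v) = fev t p v.
Proof.
elim/prog_ind2: p.
- by [].
- by move=> [|n] t [|x v].
- move=> i n t v <- /=; by case: ifP.
- move=> f gs IHf IHgs n t v Hn.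
  rewrite [C n _]/= ev_mul ev_allpos.
  have Hm : [seq evalE c (t :: v) | c <- [seq C n i | i <- gs]] = [seq fev t g v | g <- gs].
    rewrite -map_comp; elim: gs IHgs {IHf} => [//|g gs IH] /= [H1 H2].
    by rewrite H1 // IH.
  have Ha : all (fun c => evalE c (t :: v) != 0) [seq C n i | i <- gs] =
     all (fun c => c != 0) [seq fev t g v | g <- gs].
    by rewrite -Hm [RHS]all_map.
  rewrite Ha /=; case: ifP => _; last by rewrite mul0n.
  rewrite mul1n /= -map_comp.
  have -> : [seq ((evalE^~ (t :: v)) \o predE) i | i <- [seq C n i | i <- gs]] =
      [seq predn c | c <- [seq fev t g v | g <- gs]].
    rewrite -Hm -!map_comp; apply: eq_map => c /=; exact: ev_pred.
  by apply: IHf; rewrite !size_map.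
- move=> f g IHf IHg [|n] t [|x v] // [Hn].
  rewrite [C _ _]/= ev_L [fev _ _ _]/=.
  apply: eq_iterp.
  + rewrite ev_Cm /= -Hn (map_nth_iota [:: t; x] v) /=. exact: IHf.
  + move=> i z; rewrite ev_mul ev_sg ev_Cm.
    case: z => [//|z] /=.
    rewrite mul1n -Hn (map_nth_iota [:: i; z.+1; t; x] v).
    by apply: IHg; rewrite /= Hn.
- move=> f IHf n t v Hn.
  rewrite [C _ _]/= ev_pred ev_L [fev _ _ _]/=; congr predn; apply: eq_iterp => // j s.
  rewrite ev_mustep ev_Cm; congr mustep.
  rewrite /= -Hn (map_nth_iota [:: j; s; t] v) /=.
  by apply: IHf; rewrite /= Hn.
Qed.

Lemma ev_Cm1 f a v : evalE (Cm f [:: a]) v = evalE f [:: evalE a v].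
Proof. by []. Qed.
Lemma ev_Cm2 f a b v : evalE (Cm f [:: a; b]) v = evalE f [:: evalE a v; evalE b v].
Proof. by []. Qed.
Lemma ev_Cm3 f a b c v : evalE (Cm f [:: a; b; c]) v = evalE f [:: evalE a v; evalE b v; evalE c v].
Proof. by []. Qed.
Lemma ev_V0 x l : evalE (V 0) (x :: l) = x. Proof. by []. Qed.
Lemma ev_V1 x y l : evalE (V 1) (x :: y :: l) = y. Proof. by []. Qed.
Lemma ev_V2 x y z l : evalE (V 2) [:: x, y, z & l] = z. Proof. by []. Qed.
Lemma ev_V3 x y z w l : evalE (V 3) [:: x, y, z, w & l] = w. Proof. by []. Qed.

Section Mus.
Variable c : nat -> nat.
Definition mus T := iterp T 0 (fun j s => mustep j s (c j)).

Lemma mus0 T : mus T = 0 <-> (forall j, j < T -> 2 <= c j).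
Proof.
elim: T => [|T IH]; first by split => // _ j.
rewrite /mus /= -/(mus T) /mustep.
case E: (mus T) => [|s].
- have H := proj1 IH E. rewrite /= add0n mul1n.
  split.
  + move=> H0 j; rewrite ltnS leq_eqVlt => /orP [/eqP ->|/H //].
    move: H0; case: (c T) => [|[|x]] //=.
  + move=> H1; have := H1 T (ltnSn T); case: (c T) => [|[|x]] //=.
- rewrite /= ?mul0n ?addn0; split => // H1.
  suff : mus T = 0 by rewrite E.
  by apply/IH => j Hj; apply: H1; apply: ltnW.
Qed.

Lemma musS T m : mus T = m.+2 <-> (m < T /\ c m = 1 /\ forall j, j < m -> 2 <= c j).
Proof.
elim: T => [|T IH]; first by split => // [[]].
rewrite /mus /= -/(mus T) /mustep.
case E: (mus T) => [|s].
- have H := proj1 (mus0 T) E. rewrite /= add0n mul1n.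
  split.
  + case Ec: (c T) => [|[|x]] //= Hv.
    have -> : m = T by move: Hv; rewrite mul1n; lia.
    by split.
  + move=> [H1 [H2 H3]].
    have HmT : m = T.
      apply/eqP; rewrite eqn_leq -ltnS H1 /= leqNgt; apply/negP => HT.
      by have := H m HT; rewrite H2.
    by subst m; rewrite H2 /= mul1n.
- have -> : s.+1 + (s.+1 == 0) * ((c T == 0) + (c T == 1) * T.+2) = s.+1 by rewrite /= mul0n addn0.
  split.
  + by move=> Hs; have [H1 H2] := proj1 IH (etrans E Hs); split => //; apply: ltnW.
  + move=> [H1 [H2 H3]].
    move: H1; rewrite ltnS leq_eqVlt => /orP [/eqP Hm|HT].
    * subst m. suff : mus T = 0 by rewrite E.
      by apply/mus0.
    * by rewrite -E; apply/IH.
Qed.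
End Mus.

Lemma fev_PMu t f v : fev t (PMu f) v = (mus (fun j => fev t f (j :: v)) t).-1.
Proof. by []. Qed.

Lemma fev_mono p : forall t t' v y, t <= t' -> fev t p v = y.+1 -> fev t' p v = y.+1.
Proof.
elim/prog_ind2: p => //.
- move=> f gs IHf IHgs t t' v y Htt /=.
  have Hm : all (fun c => c != 0) [seq fev t g v | g <- gs] ->
     [seq fev t' g v | g <- gs] = [seq fev t g v | g <- gs].
    elim: gs IHgs {IHf} => [//|g gs IH] /= [H1 H2] /andP [Hg Hgs].
    rewrite IH //; congr (_ :: _).
    by move: Hg; case E: (fev t g v) => [//|z] _; apply: H1 E.
  case: ifP => // Ha Hf.
  by rewrite Hm // Ha; apply: IHf Hf.
- move=> f g IHf IHg t t' [//|x v] y Htt /=.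
  elim: x y => [|x IH] y /=; first by apply: IHf.
  case E: (iterp _ _ _) => [//|z] Hg.
  by rewrite (IH _ E); apply: IHg Hg.
- move=> f IHf t t' v y Htt; rewrite !fev_PMu.
  case E: (mus _ t) => [//|[//|m]] /= [<-] {y}.
  have [H1 [H2 H3]] := proj1 (musS _ _ _) E.
  suff -> : mus (fun j => fev t' f (j :: v)) t' = m.+2 by [].
  apply/musS; split; first by apply: leq_trans Htt.
  split; first by apply: IHf H2.
  move=> j Hj; have := H3 j Hj.
  case E2: (fev t f (j :: v)) => [//|z] Hz.
  by rewrite (IHf _ _ _ _ Htt E2).
Qed.

Lemma fev_sound p : forall t v y, fev t p v = y.+1 -> peval p v y.
Proof.
elim/prog_ind2: p.
- by move=> t v y [<-]; apply: ev_zero.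
- by move=> t [//|x v] y [<-]; apply: ev_succ.
- move=> i t v y /=; case: ifP => // Hi [<-]; exact: ev_proj.
- move=> f gs IHf IHgs t v y /=; case: ifP => // Ha Hf.
  apply: ev_comp; last by apply: IHf Hf.
  elim: gs IHgs Ha {IHf Hf} => [|g gs IH] /=; first by move=> *; apply: evs_nil.
  move=> [H1 H2] /andP [Hg Hgs]; apply: evs_cons; last by apply: IH.
  by move: Hg; case E: (fev t g v) => [//|z] _; apply: H1 E.
- move=> f g IHf IHg t [//|x v] y /=.
  elim: x y => [|x IH] y /=; first by move=> H; apply: ev_prim0; apply: IHf H.
  case E: (iterp _ _ _) => [//|z] Hg.
  apply: ev_primS; first exact: IH E.
  exact: IHg Hg.
- move=> f IHf t v y; rewrite fev_PMu.
  case E: (mus _ t) => [//|[//|m]] /= [<-] {y}.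
  have [H1 [H2 H3]] := proj1 (musS _ _ _) E.
  apply: ev_mu; first by apply: IHf H2.
  move=> j Hj; have := H3 j Hj.
  case E2: (fev t f (j :: v)) => [//|[//|z]] _.
  by exists z.+1; split => //; apply: IHf E2.
Qed.

Lemma collect (P : nat -> nat -> Prop) n :
  (forall m t t', t <= t' -> P m t -> P m t') ->
  (forall m, m < n -> exists t, P m t) -> exists T, forall m, m < n -> P m T.
Proof.
move=> Hmono; elim: n => [|n IH] H; first by exists 0.
have [T1 HT1] := IH (fun m Hm => H m (ltnW Hm)).
have [t2 Ht2] := H n (ltnSn n).
exists (maxn T1 t2) => m; rewrite ltnS leq_eqVlt => /orP [/eqP ->|Hm].
- by apply: Hmono Ht2; apply: leq_maxr.
- by apply: Hmono (HT1 m Hm); apply: leq_maxl.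
Qed.

Lemma map_mono gs v t t' ys : t <= t' ->
  [seq fev t g v | g <- gs] = map succn ys -> [seq fev t' g v | g <- gs] = map succn ys.
Proof.
move=> Htt; elim: gs ys => [|g gs IH] [|y ys] //= [H1 H2].
by rewrite (fev_mono Htt H1) (IH _ H2).
Qed.

Lemma comp_comb g gs v y ys :
  (exists t, fev t g v = y.+1) -> (exists t, [seq fev t g v | g <- gs] = map succn ys) ->
  exists t, [seq fev t g v | g <- g :: gs] = map succn (y :: ys).
Proof.
move=> [ta Ha] [tb Hb].
exists (maxn ta tb) => /=.
rewrite (fev_mono (leq_maxl ta tb) Ha); congr (_ :: _).
exact: map_mono (leq_maxr ta tb) Hb.
Qed.

Lemma fev_complete : forall p v y, peval p v y -> exists t, fev t p v = y.+1.
Proof.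
fix IH 4.
move=> p v y H; destruct H.
- by exists 0.
- by exists 0.
- by exists 0; rewrite /= H.
- have [t1 Ht1] := (fix go (gs0 : seq prog) (v0 : seq nat) (ws0 : seq nat)
      (Hs : pevals gs0 v0 ws0) {struct Hs} :
      exists t, [seq fev t g v0 | g <- gs0] = map succn ws0 :=
    match Hs in pevals gs0 v0 ws0
      return exists t, [seq fev t g v0 | g <- gs0] = map succn ws0 with
    | evs_nil v0 => ex_intro _ 0 erefl
    | evs_cons g gs1 v0 y ys Hg Hgs => comp_comb (IH _ _ _ Hg) (go _ _ _ Hgs)
    end) gs v ws H.
  have [t2 Ht2] := IH _ _ _ H0.
  exists (maxn t1 t2) => /=.
  rewrite (map_mono (leq_maxl t1 t2) Ht1).
  have -> : all (fun c => c != 0) (map succn ws) by elim: (ws) => //.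
  rewrite -map_comp map_id.
  by apply: fev_mono (leq_maxr t1 t2) Ht2.
- have [t Ht] := IH _ _ _ H. by exists t.
- have [t1 Ht1] := IH _ _ _ H.
  have [t2 Ht2] := IH _ _ _ H0.
  exists (maxn t1 t2).
  have := fev_mono (leq_maxl t1 t2) Ht1 => /= ->.
  by apply: fev_mono (leq_maxr t1 t2) Ht2.
- have [t0 Ht0] := IH _ _ _ H.
  have [T1 HT1] : exists T, forall m, m < n ->
      exists y, y <> 0 /\ fev T f (m :: v) = y.+1.
    apply: collect.
    + move=> m t t' Htt [y [Hy Hf]]; exists y; split => //; exact: fev_mono Htt Hf.
    + move=> m Hm; case: (H0 m Hm) => y [Hy Hp].
      have [t Ht] := IH _ _ _ Hp.
      by exists t, y.
  exists (maxn (maxn t0 T1) n.+1); rewrite fev_PMu.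
  suff -> : mus (fun j => fev (maxn (maxn t0 T1) n.+1) f (j :: v)) (maxn (maxn t0 T1) n.+1) = n.+2 by [].
  apply/musS; split; first by rewrite leq_max leqnn orbT.
  split; first by apply: fev_mono Ht0; rewrite !leq_max leqnn.
  move=> j Hj; have [y [Hy Hf]] := HT1 j Hj.
  rewrite (fev_mono _ Hf); last by rewrite !leq_max leqnn orbT.
  by case: y Hy {Hf}.
Qed.

Section Grp.
Variable G : group.
Local Notation "a * b" := (gmul a b).
Lemma gmulVr (a : G) : a * ginv a = gone G.
Proof.
have H := gmulV (ginv a).
rewrite -[LHS](gmul1) -H -gmulA (gmulA (ginv a)) (gmulV a) gmul1 //.
Qed.
Lemma gmul1r (a : G) : a * gone G = a.
Proof. by rewrite -(gmulV a) gmulA gmulVr gmul1. Qed.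
Lemma gcancel (a b : G) : a = a * b -> b = gone G.
Proof.
move=> H; have := congr1 (gmul (ginv a)) H.
by rewrite gmulA gmulV gmul1 => ->.
Qed.
End Grp.

Section Words.
Variable k : nat.
Notation letter := (letter k).
Notation word := (seq letter).

Definition linv (x : letter) : letter := (x.1, ~~ x.2).
Lemma linvK x : linv (linv x) = x.
Proof. by case: x => i b; rewrite /linv /= negbK. Qed.

Definition consred (x : letter) (w : word) : word :=
  if w is y :: w' then (if y == linv x then w' else x :: w) else [:: x].
Definition F (u acc : word) : word := foldr consred acc u.

Lemma reduced_cons (x : letter) (w : word) : reduced (x :: w) = (if w is y :: _ then y != linv x else true) && reduced w.
Proof.
case: w => [|y w] //=; congr andb.
case: x y => [i b] [j c]; rewrite /linv /= xpair_eqE.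
by case: b; case: c; rewrite ?andbT ?andbF // eq_sym.
Qed.

Lemma reduced_tail (x : letter) (w : word) : reduced (x :: w) -> reduced w.
Proof. by rewrite reduced_cons => /andP []. Qed.

Lemma consred_red x w : reduced w -> reduced (consred x w).
Proof.
case: w => [//|y w] Hw; rewrite /consred.
case: eqP => [_|Hne]; first exact: reduced_tail Hw.
by rewrite reduced_cons Hw andbT; apply/eqP.
Qed.

Lemma F_red u acc : reduced acc -> reduced (F u acc).
Proof. by move=> H; elim: u => //= x u IH; apply: consred_red. Qed.

Lemma consred_cancel x q : reduced q -> consred x (consred (linv x) q) = q.
Proof.
case: q => [|y q] Hq; first by rewrite /= eqxx.
have -> : consred (linv x) (y :: q) = if y == x then q else [:: linv x, y & q].
  by rewrite /= linvK.
case: eqP => [Ey|Hne].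
- subst y. case: q Hq => [|z q] Hq; first by [].
  rewrite reduced_cons in Hq; case/andP: Hq => Hz _. by rewrite /= (negbTE Hz).
- by rewrite /= eqxx.
Qed.

Lemma consred_F x y z : reduced y -> reduced z -> F (consred x y) z = consred x (F y z).
Proof.
case: y => [//|y0 y] Hy Hz /=.
case: eqP => [->|_] //.
by rewrite /= consred_cancel // F_red // (reduced_tail Hy).
Qed.

Lemma F_assoc a y z : reduced y -> reduced z -> F (F a y) z = F a (F y z).
Proof.
move=> Hy Hz; elim: a => //= x a IH.
by rewrite consred_F ?F_red // IH.
Qed.

Lemma F_cat a b acc : F (a ++ b) acc = F a (F b acc).
Proof. exact: foldr_cat. Qed.

Definition winv (w : word) : word := rev (map linv w).

Lemma F_winv w acc : reduced acc -> F (w ++ winv w) acc = acc.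
Proof.
elim: w acc => //= x w IH acc Hacc.
rewrite /winv map_cons rev_cons -cats1 catA F_cat IH; last by apply: consred_red.
by rewrite /= consred_cancel // linvK.
Qed.

Lemma F_nil u : reduced u -> F u [::] = u.
Proof.
elim: u => // x u IH Hu.
rewrite [F _ _]/= IH ?(reduced_tail Hu) //.
case: u Hu {IH} => [//|y u]; rewrite reduced_cons => /andP [Hy _].
by rewrite /= (negbTE Hy).
Qed.

Lemma F_inj W u1 u2 : reduced W -> reduced u1 -> reduced u2 -> F u1 W = F u2 W -> u1 = u2.
Proof.
move=> HW H1 H2 E.
have Hz : reduced (F (winv W) [::]) by apply: F_red.
have key u : reduced u -> F (F u W) (F (winv W) [::]) = u.
  move=> Hu; rewrite F_assoc // -(F_cat W) F_winv //; exact: F_nil.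
by rewrite -(key u1 H1) E key.
Qed.

Lemma size_consred x w : size (consred x w) <= (size w).+1.
Proof. case: w => //= y w; case: eqP => //= _; lia. Qed.

Lemma size_F u acc : size (F u acc) <= size u + size acc.
Proof.
elim: u => //= x u IH; apply: leq_trans (size_consred _ _) _; by rewrite addSn ltnS.
Qed.

Section Pi.
Variable G : group.
Variable gen : 'I_k -> G.
Local Notation "a * b" := (gmul a b).
Lemma piw_cons x w : piw gen (x :: w) = gen_val gen x * piw gen w.
Proof. by []. Qed.
Lemma piw_cat u w : piw gen (u ++ w) = piw gen u * piw gen w.
Proof. by elim: u => /= [|x u ->]; rewrite ?gmul1 ?gmulA. Qed.
Lemma piw_consred x w : piw gen (consred x w) = gen_val gen x * piw gen w.
Proof.
case: w => [//|y w] /=; case: eqP => [->|_] //.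
rewrite gmulA /gen_val /linv /=; case: (x.2) => /=.
- by rewrite gmulV gmul1.
- by rewrite gmulVr gmul1.
Qed.
Lemma piw_F u acc : piw gen (F u acc) = piw gen u * piw gen acc.
Proof. by elim: u => /= [|x u IH]; rewrite ?gmul1 // piw_consred IH gmulA. Qed.
End Pi.
End Words.

Lemma dm d a B : d < B -> (d + B * a) %% B = d /\ (d + B * a) %/ B = a.
Proof.
move=> H; have HB : 0 < B by apply: leq_ltn_trans H.
rewrite addnC mulnC; split.
- by rewrite modnMDl modn_small.
- by rewrite divnMDl // divn_small // addn0.
Qed.

Definition invd (d : nat) : nat := if odd d then d.+1 else d.-1.
Definition cr (B d a : nat) : nat :=
  if (0 < a) && (a %% B == invd d) then a %/ B else d + B * a.
Definition crstep (B d a : nat) : nat := if d == 0 then a else cr B d a.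
Definition digs (B m : nat) : seq nat := [seq m %/ B ^ i %% B | i <- iota 0 m].
Definition FRc (B m a : nat) : nat := foldr (crstep B) a (digs B m).

Section Codes.
Variable k : nat.
Notation letter := (letter k).
Notation word := (seq letter).
Notation Bk := (2 * k).+1.

Definition ldig (x : letter) : nat := (letter_code x).+1.
Definition dletter (d : nat) : option letter :=
  if d is d'.+1 then omap (fun i : 'I_k => (i, odd d')) (insub d'./2) else None.

Lemma ldig_lt x : ldig x < Bk.
Proof. case: x => [[i Hi] b]; rewrite /ldig /letter_code /=; case: b => /=; lia. Qed.

Lemma ldig_inj : injective ldig.
Proof.
move=> [[i Hi] b] [[j Hj] c]; rewrite /ldig /letter_code /= => [[H]].
have [Hij Hbc] : i = j /\ b = c by case: b c H => [] [] /=; lia.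
subst; congr pair; exact: val_inj.
Qed.

Lemma invd_ldig x : invd (ldig x) = ldig (linv x).
Proof.
case: x => [[i Hi] b]; rewrite /invd /ldig /letter_code /linv /=.
by case: b => /=; rewrite oddD oddM /= ?addn0 ?addn1.
Qed.

Lemma code_cons x w : word_code (x :: w) = ldig x + Bk * word_code w.
Proof. by []. Qed.

Lemma code_consred x w : word_code (consred x w) = cr Bk (ldig x) (word_code w).
Proof.
case: w => [|y w]; first by rewrite /cr /= muln0.
rewrite code_cons /cr; have [Hm Hd] := dm (word_code w) (ldig_lt y).
rewrite Hm Hd addn_gt0 /= invd_ldig (inj_eq ldig_inj).
by rewrite /consred; case: ifP.
Qed.

Lemma dletter_ldig x : dletter (ldig x) = Some x.
Proof.
case: x => [[i Hi] b]; rewrite /dletter /ldig /letter_code /=.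
have -> : (2 * i + b)./2 = i by case: b; rewrite /= ?addn0 ?addn1 ?doubleK //; lia.
rewrite insubT /=; congr (Some (_, _)); last by case: b; rewrite oddD oddM.
Qed.

Lemma dletter_some d x : dletter d = Some x -> ldig x = d.
Proof.
case: d => [//|d] /=; case: insubP => [i Hi Hv|//] /= [<-].
rewrite /ldig /letter_code /= Hv; congr succn.
by rewrite -{3}(odd_double_half d) addnC mul2n.
Qed.

Lemma dletter_none d : d < Bk -> dletter d = None -> d = 0.
Proof.
case: d => [//|d] Hd /=; case: insubP => [//|Hn] _.
exfalso; move/negP: Hn; apply; lia.
Qed.

Lemma code_F ds (acc : word) : all (fun d => d < Bk) ds ->
  word_code (F (pmap dletter ds) acc) = foldr (crstep Bk) (word_code acc) ds.
Proof.
elim: ds => //= d ds IH /andP [Hd Hds].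
case E: (dletter d) => [x|] /=.
- rewrite code_consred IH // (dletter_some E) /crstep.
  by case: d Hd E.
- by rewrite (dletter_none Hd E) /crstep eqxx IH.
Qed.

Lemma digs_lt m : all (fun d => d < Bk) (digs Bk m).
Proof. by apply/allP => d /mapP [i _ ->]; rewrite ltn_pmod. Qed.

Definition lets (m : nat) : word := pmap dletter (digs Bk m).

Lemma code_FR m acc : word_code (F (lets m) acc) = FRc Bk m (word_code acc).
Proof. exact: code_F (digs_lt m). Qed.

Lemma size_code (u : word) : size u <= word_code u.
Proof. elim: u => //= x u IH; rewrite /letter_code; lia. Qed.

Lemma digit_code (u : word) i : word_code u %/ Bk ^ i %% Bk = nth 0 (map ldig u) i.
Proof.
elim: u i => [|x u IH] i; first by rewrite div0n mod0n nth_nil.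
rewrite code_cons; have [Hm Hd] := dm (word_code u) (ldig_lt x).
case: i => [|i]; first by rewrite expn0 divn1 Hm.
by rewrite expnS divnMA Hd IH.
Qed.

Lemma lets_code (u : word) : lets (word_code u) = u.
Proof.
rewrite /lets /digs.
have Hs := size_code u.
rewrite [iota 0 _](_ : _ = iota 0 (size u) ++ iota (0 + size u) (word_code u - size u)); last by rewrite -iotaD subnKC.
rewrite map_cat pmap_cat.
have -> : [seq word_code u %/ Bk ^ i %% Bk | i <- iota 0 (size u)] = map ldig u.
  rewrite (eq_map (digit_code u)).
  by rewrite -(size_map ldig u) -/(mkseq _ _) mkseq_nth.
have -> : pmap dletter [seq word_code u %/ Bk ^ i %% Bk | i <- iota (0 + size u) (word_code u - size u)] = [::].
  have -> : [seq word_code u %/ Bk ^ i %% Bk | i <- iota (0 + size u) (word_code u - size u)] = map (fun _ => 0) (iota (0 + size u) (word_code u - size u)).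
    apply/eq_in_map => i; rewrite mem_iota add0n => /andP [Hi _].
    by rewrite digit_code nth_default // size_map.
  by elim: (iota _ _) => //= n l ->.
rewrite cats0; elim: u {Hs} => // x u IH.
have -> : pmap dletter (map ldig (x :: u)) = oapp (cons^~ (pmap dletter (map ldig u))) (pmap dletter (map ldig u)) (dletter (ldig x)) by [].
by rewrite dletter_ldig IH.
Qed.
End Codes.

Lemma iterpS n x f : iterp n.+1 x f = f n (iterp n x f).
Proof. by []. Qed.

Definition leE a b := isz (sub a b).
Lemma ev_le v a b : evalE (leE a b) v = (evalE a v <= evalE b v).
Proof. by rewrite /leE ev_isz ev_sub subn_eq0. Qed.

Definition divB := L (V 0) Z (add (V 1) (leE (mulE (S (V 0)) (V 3)) (V 2))).
Definition divE a b := Cm divB [:: a; b].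
Lemma ev_div v a b : 0 < evalE b v -> evalE (divE a b) v = evalE a v %/ evalE b v.
Proof.
move=> Hb; rewrite ev_Cm /divB ev_L /=.
set A := evalE a v; set Bv := evalE b v.
have H : forall n, iterp n 0 (fun i z => evalE (add (V 1) (leE (mulE (S (V 0)) (V 3)) (V 2))) [:: i, z, A & [:: Bv]]) = minn n (A %/ Bv).
  elim=> [|n IH]; first by rewrite min0n.
  rewrite iterpS ev_add ev_le ev_mul /= IH -leq_divRL //.
  case: (leqP n.+1 (A %/ Bv)) => H.
  + by rewrite (minn_idPl (ltnW H)) addn1.
  + rewrite ltnS in H; by rewrite (minn_idPr H) addn0.
by rewrite H (minn_idPr (leq_div _ _)).
Qed.

Definition modE a b := sub a (mulE b (divE a b)).
Lemma ev_mod v a b : 0 < evalE b v -> evalE (modE a b) v = evalE a v %% evalE b v.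
Proof.
move=> Hb; rewrite /modE ev_sub ev_mul ev_div // [X in _ - X]mulnC.
by rewrite {1}(divn_eq (evalE a v) (evalE b v)) addKn.
Qed.

Definition powB := L (V 1) (S Z) (mulE (V 1) (V 2)).
Definition powE a e := Cm powB [:: a; e].
Lemma ev_pow v a e : evalE (powE a e) v = evalE a v ^ evalE e v.
Proof.
rewrite ev_Cm /powB ev_L.
have -> : evalE (V 1) [seq evalE a0 v | a0 <- [:: a; e]] = evalE e v by [].
elim: (evalE e v) => [|n IH] //.
by rewrite iterpS ev_mul [evalE (V 1) _]/= IH expnSr.
Qed.

Definition invdB := iteE (modE (V 0) (cst 2)) (S (V 0)) (predE (V 0)).
Definition invdE d := Cm invdB [:: d].
Lemma ev_invd v d : evalE (invdE d) v = invd (evalE d v).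
Proof.
rewrite ev_Cm /invdB ev_ite ev_mod ev_cst // ev_pred /= modn2 /invd.
by case: odd.
Qed.

Lemma eq_iterp_lt n x f f' : (forall i z, i < n -> f i z = f' i z) ->
  iterp n x f = iterp n x f'.
Proof. by move=> H; elim: n H => //= n IH H; rewrite H // IH // => i z Hi; apply: H; apply: ltnW. Qed.

Lemma foldr_iterp (g : nat -> nat -> nat) a n : forall h,
  foldr g a [seq h i | i <- iota 0 n] = iterp n a (fun j acc => g (h (n.-1 - j)) acc).
Proof.
elim: n => [//|n IH] h.
rewrite /= subnn; congr (g (h 0)).
rewrite (_ : iota 1 n = map (addn 1) (iota 0 n)); last by rewrite -iotaDl.
rewrite -map_comp IH; apply: eq_iterp_lt => i z Hi /=.
congr (g (h _)); lia.
Qed.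

Section CR.
Variable B : nat.
Hypothesis HB : 0 < B.
Definition crB := iteE (mulE (sgE (V 1)) (eqEx (modE (V 1) (cst B)) (invdE (V 0))))
   (divE (V 1) (cst B)) (add (V 0) (mulE (cst B) (V 1))).
Definition crE d a := Cm crB [:: d; a].
Lemma ev_cr v d a : evalE (crE d a) v = cr B (evalE d v) (evalE a v).
Proof.
rewrite ev_Cm /crB ev_ite ev_mul ev_sg ev_eq ev_mod ev_cst // ev_invd ev_div ?ev_cst //.
rewrite ev_add ev_mul ev_cst /= /cr.
case: (evalE a v) => [|n]; rewrite /= ?mul0n ?mul1n //; by case: (n.+1 %% B == _).
Qed.

Definition crstepB := iteE (V 0) (crE (V 0) (V 1)) (V 1).
Definition digitE m i := modE (divE m (powE (cst B) i)) (cst B).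
Definition FRB := L (V 0) (V 1)
   (Cm crstepB [:: digitE (V 2) (sub (sub (V 2) (cst 1)) (V 0)); V 1]).
Definition FRE m a := Cm FRB [:: m; a].

Lemma ev_FR v m a : evalE (FRE m a) v = FRc B (evalE m v) (evalE a v).
Proof.
rewrite ev_Cm2 /FRB ev_L /FRc /digs foldr_iterp ev_V0 ev_V1.
apply: eq_iterp => // j z.
rewrite ev_Cm2 /crstepB ev_ite ev_cr ev_V0 ev_V1 /digitE ev_mod ?ev_cst // ev_div; last first.
  by rewrite ev_pow ev_cst expn_gt0 HB.
rewrite ev_pow ev_cst !ev_sub ev_cst /= /crstep subn1.
by case: eqP.
Qed.
End CR.

Section Main.
Variables (k k' : nat) (tau : letter k' -> seq (letter k)) (p : prog).
Notation B := (2 * k).+1.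
Notation B' := (2 * k').+1.

Lemma code_Fw (tw acc : seq (letter k)) :
  word_code (F tw acc) = foldr (cr B) (word_code acc) (map (@ldig k) tw).
Proof. by elim: tw => //= x tw <-; rewrite code_consred. Qed.

Definition taud (d : nat) : seq (letter k) :=
  if dletter k' d is Some x' then tau x' else [::].
Definition CWc (d acc : nat) : nat := foldr (cr B) acc (map (@ldig k) (taud d)).
Definition TRstep (d acc : nat) : nat := if d == 0 then acc else CWc d acc.
Definition TRc (c : nat) : nat := foldr TRstep 0 (digs B' c).

Definition CWE (tw : seq (letter k)) (a : E) : E :=
  foldr (fun x e => crE B (cst (ldig x)) e) a tw.
Lemma ev_CW v tw a : evalE (CWE tw a) v = foldr (cr B) (evalE a v) (map (@ldig k) tw).
Proof.
elim: tw => // x tw IH.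
have -> : CWE (x :: tw) a = crE B (cst (ldig x)) (CWE tw a) by [].
by rewrite ev_cr // ev_cst IH.
Qed.

Definition TRstepL (l : seq nat) : E :=
  foldr (fun d0 e => add (mulE (eqEx (V 1) (cst d0)) (CWE (taud d0) (V 0))) e)
    (mulE (isz (V 1)) (V 0)) l.
Lemma ev_TRstepL l acc d : uniq l ->
  evalE (TRstepL l) [:: acc; d] = (if d \in l then CWc d acc else 0) + (d == 0) * acc.
Proof.
elim: l => [|d0 l IH].
  move=> _; have -> : TRstepL [::] = mulE (isz (V 1)) (V 0) by [].
  by rewrite ev_mul ev_isz ev_V0 ev_V1 in_nil add0n.
rewrite cons_uniq => /andP [Hd0 Hu].
have -> : TRstepL (d0 :: l) = add (mulE (eqEx (V 1) (cst d0)) (CWE (taud d0) (V 0))) (TRstepL l) by [].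
rewrite ev_add ev_mul ev_eq ev_cst ev_CW IH // in_cons ev_V0 ev_V1.
case: (eqVneq d d0) => [->|Hne] /=.
- by rewrite (negbTE Hd0) mul1n add0n.
- by rewrite mul0n add0n.
Qed.

Definition TRstepB := TRstepL (iota 1 (2 * k')).
Lemma ev_TRstepB acc d : d < B' -> evalE TRstepB [:: acc; d] = TRstep d acc.
Proof.
move=> Hd; rewrite /TRstepB ev_TRstepL ?iota_uniq // mem_iota /TRstep.
case: d Hd => [|d] Hd /=; first by rewrite mul1n.
by rewrite mul0n addn0 add1n Hd.
Qed.

Definition TRB := L (V 0) Z (Cm TRstepB [:: V 1; digitE B' (V 2) (sub (sub (V 2) (cst 1)) (V 0))]).
Definition TRE c := Cm TRB [:: c].
Lemma ev_TR v c : evalE (TRE c) v = TRc (evalE c v).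
Proof.
rewrite ev_Cm1 /TRB ev_L /TRc /digs foldr_iterp ev_V0.
apply: eq_iterp => // j z.
rewrite ev_Cm2 ev_V1 /digitE ev_mod ?ev_cst // ev_div; last first.
  by rewrite ev_pow ev_cst expn_gt0.
rewrite ev_pow ev_cst !ev_sub ev_cst ev_V0 ev_V2 subn1 ev_TRstepB //.
by rewrite ltn_pmod.
Qed.

Definition TRw (w : seq (letter k')) : seq (letter k) :=
  foldr (fun x' acc => F (tau x') acc) [::] w.

Lemma code_TRgen ds (acc : seq (letter k)) : all (fun d => d < B') ds ->
  word_code (foldr (fun x' acc => F (tau x') acc) acc (pmap (dletter k') ds)) =
  foldr TRstep (word_code acc) ds.
Proof.
elim: ds => //= d ds IH /andP [Hd Hds].
case E: (dletter k' d) => [x|] /=.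
- rewrite code_Fw IH // /TRstep /CWc /taud E.
  by case: d Hd E.
- by rewrite (dletter_none Hd E) /TRstep eqxx IH.
Qed.

Lemma code_TR c : word_code (TRw (lets k' c)) = TRc c.
Proof. exact: code_TRgen (digs_lt k' c). Qed.

Lemma TRw_red w : reduced (TRw w).
Proof. by elim: w => //= x w IH; apply: F_red. Qed.

Definition run (m t c : nat) : nat := fev t p [:: FRc B m 0; FRc B m (TRc c)].
Definition runB : E := Cm (C 2 p) [:: V 1; FRE B (V 0) Z; FRE B (V 0) (TRE (V 2))].
Lemma ev_run m t c : evalE runB [:: m; t; c] = run m t c.
Proof.
rewrite ev_Cm3 ev_V1 !ev_FR // ev_TR ev_V0 ev_V2 [evalE Z _]/=.
by rewrite C_ok.
Qed.

Definition sstep t c := fun m s => if s != 0 then s else (run m t c != 0) * m.+1.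
Definition sv t c := iterp t 0 (sstep t c).
Definition searchE : E :=
  L (V 0) Z (iteE (V 1) (V 1) (mulE (sgE (Cm runB [:: V 0; V 2; V 3])) (S (V 0)))).
Lemma ev_search t c : evalE searchE [:: t; c] = sv t c.
Proof.
rewrite /searchE ev_L /sv; apply: eq_iterp => // m s.
rewrite ev_ite ev_mul ev_sg ev_Cm3 ev_V0 ev_V1 ev_V2 ev_V3 ev_run.
by [].
Qed.

Lemma sv_found t c n m : iterp n 0 (sstep t c) = m.+1 -> run m t c != 0.
Proof.
elim: n => [//|n IH]; rewrite iterpS /sstep -/(sstep t c).
case: eqP => [->|_ /IH //] /=.
case E: (run n t c != 0); rewrite ?mul1n ?mul0n // => [[<-]]; by rewrite E.
Qed.

Lemma sv_pos t c n m : m < n -> run m t c != 0 -> iterp n 0 (sstep t c) != 0.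
Proof.
elim: n => [//|n IH]; rewrite ltnS leq_eqVlt iterpS /sstep -/(sstep t c) => /orP [/eqP ->|Hm] Hr.
- by case: ifP => // _; rewrite Hr mul1n.
- by have := IH Hm Hr => H; rewrite H.
Qed.

Definition QE : E := isz searchE.
Definition OUTE : E := predE (Cm runB [:: predE searchE; V 0; V 1]).
Definition FINAL : prog := PComp (cE 2 OUTE) [:: PMu (cE 2 QE); PProj 0].

Lemma ev_Q t c : evalE QE [:: t; c] = (sv t c == 0).
Proof. by rewrite ev_isz ev_search. Qed.
Lemma ev_OUT t c : evalE OUTE [:: t; c] = (run (sv t c).-1 t c).-1.
Proof. by rewrite ev_pred ev_Cm3 ev_pred ev_search ev_V0 ev_V1 ev_run. Qed.

End Main.

Section Ball.
Import Order.TTheory GRing.Theory Num.Theory.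
Variable k : nat.
Notation letter := (letter k).
Notation word := (seq letter).

Lemma mem_wol n (w : word) : (w \in words_of_len k n) = (size w == n).
Proof.
elim: n w => [|n IH] w; first by case: w.
apply/allpairsP/idP => [[[x w'] [_ H2 ->]]|].
- by rewrite /= eqSS -IH.
- case: w => [//|x w'] /=; rewrite eqSS -IH => H.
  by exists (x, w'); rewrite mem_enum.
Qed.

Lemma uniq_wol n : uniq (words_of_len k n).
Proof.
elim: n => [//|n IH] /=.
apply: allpairs_uniq => //; first exact: enum_uniq.
by move=> [x1 w1] [x2 w2] _ _ /= [-> ->].
Qed.

Lemma mem_flat n (w : word) :
  (w \in flatten [seq words_of_len k j | j <- iota 0 n.+1]) = (size w <= n).
Proof.
apply/flattenP/idP => [[s /mapP [j Hj ->]]|H].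
- by rewrite mem_wol => /eqP ->; move: Hj; rewrite mem_iota.
- exists (words_of_len k (size w)); last by rewrite mem_wol.
  by apply: map_f; rewrite mem_iota.
Qed.

Lemma uniq_flat n : uniq (flatten [seq words_of_len k j | j <- iota 0 n]).
Proof.
elim: n => [//|n IH].
rewrite -addn1 iotaD map_cat flatten_cat cat_uniq IH /= cats0 uniq_wol andbT.
apply/hasPn => w; rewrite mem_wol => /eqP Hw.
apply/flattenP => [[s /mapP [j Hj ->]]]; rewrite mem_wol Hw.
by move: Hj; rewrite mem_iota => /andP [_ H] /eqP Hj; move: H; rewrite Hj; lia.
Qed.

Lemma mem_ball n (w : word) : (w \in ball k n) = reduced w && (size w <= n).
Proof. by rewrite /ball mem_filter mem_flat. Qed.

Lemma uniq_ball n : uniq (ball k n).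
Proof. by apply: filter_uniq; apply: uniq_flat. Qed.

Lemma ball_pos n : 0 < size (ball k n).
Proof.
have : [::] \in ball k n by rewrite mem_ball.
by case: (ball k n).
Qed.

Lemma size_ballS n : size (ball k n.+1) <= (2 * k).+1 * size (ball k n).
Proof.
have H : size (ball k n.+1) <= size ([::] :: [seq x :: w | x <- enum letter, w <- ball k n]).
  apply: uniq_leq_size; first exact: uniq_ball.
  move=> w; rewrite mem_ball in_cons; case: w => [//|x w] /andP [Hr Hs].
  apply/orP; right; apply/allpairsP; exists (x, w) => /=; split => //.
  - by rewrite mem_enum.
  - by rewrite mem_ball (reduced_tail Hr).
apply: leq_trans H _.
rewrite (_ : size (_ :: _) = (size [seq x :: w | x <- enum letter, w <- ball k n]).+1) // size_allpairs -cardE card_prod card_ord card_bool.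
have := ball_pos n; rewrite mulSn mulnC; lia.
Qed.

Lemma size_ball_add n L : size (ball k (n + L)) <= (2 * k).+1 ^ L * size (ball k n).
Proof.
elim: L => [|L IH]; first by rewrite addn0 expn0 mul1n.
rewrite addnS; apply: leq_trans (size_ballS _) _.
by rewrite expnS -mulnA leq_mul2l IH orbT.
Qed.

Lemma count_F (S : pred word) (W : word) n : reduced W ->
  count (fun u => ~~ S (F u W)) (ball k n) <= count (predC S) (ball k (n + size W)).
Proof.
move=> HW; rewrite -!size_filter.
rewrite -(size_map (fun u => F u W)).
apply: uniq_leq_size.
- rewrite map_inj_in_uniq; first by apply: filter_uniq; apply: uniq_ball.
  move=> u1 u2; rewrite !mem_filter => /and3P [_ H1 _] /and3P [_ H2 _].
  exact: F_inj.
- move=> w /mapP [u]; rewrite mem_filter mem_ball => /and3P [HS Hr Hs] ->.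
  rewrite mem_filter mem_ball /= HS F_red //=.
  apply: leq_trans (size_F _ _) _; by rewrite leq_add2r.
Qed.

Lemma generic_exists (S : pred word) (W : word) : generic S -> reduced W ->
  exists u, [/\ reduced u, S u & S (F u W)].
Proof.
move=> HS HW.
set C := (2 * k).+1 ^ size W.
have HC : 0 < C by rewrite expn_gt0.
have Heps : (0 < ((2 * C)%:R : rat)^-1)%R by rewrite invr_gt0 ltr0n muln_gt0 HC.
have [N HN] := HS _ Heps.
have conv : forall m, (N <= m)%N -> count (predC S) (ball k m) * (2 * C) < size (ball k m).
  move=> m Hm; have := HN m Hm.
  rewrite ltr_pdivrMr ?ltr0n ?ball_pos // ltr_pdivlMl ?ltr0n ?muln_gt0 ?HC //.
  by rewrite -natrM ltr_nat mulnC.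
have E1 := conv N (leqnn N).
have E2 := conv (N + size W) (leq_addr _ _).
have E3 := size_ball_add N (size W).
have E4 := count_F S N HW.
have Hc1 := E1. have Hc2 := E2.
set b1 := count (predC S) (ball k N) in Hc1.
set b2 := count (predC S) (ball k (N + size W)) in Hc2 E4.
set b3 := count (fun u => ~~ S (F u W)) (ball k N) in E4.
set sz := size (ball k N) in Hc1 E3.
have Hb2 : b2 * 2 < sz.
  have : b2 * 2 * C < sz * C.
    rewrite -mulnA; apply: leq_trans Hc2 _; by rewrite mulnC.
  by rewrite ltn_pmul2r.
have Hb1 : b1 * 2 < sz.
  apply: leq_ltn_trans Hc1; rewrite mulnA leq_pmulr //.
have Hbad : count (fun u => ~~ (S u && S (F u W))) (ball k N) < sz.
  have := count_predUI (predC S) (fun u => ~~ S (F u W)) (ball k N).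
  rewrite (eq_count (a1 := predU (predC S) (fun u => ~~ S (F u W))) (a2 := fun u => ~~ (S u && S (F u W)))); last by move=> u /=; rewrite negb_and.
  rewrite -/b1 -/b3; lia.
have : has (fun u => S u && S (F u W)) (ball k N).
  rewrite has_count; have := count_predC (fun u => S u && S (F u W)) (ball k N).
  rewrite -/sz; move: Hbad.
  rewrite (eq_count (a1 := fun u => ~~ (S u && S (F u W))) (a2 := predC (fun u => S u && S (F u W)))) //.
  lia.
case/hasP => u; rewrite mem_ball => /andP [Hr _] /andP [H1 H2].
by exists u.
Qed.
End Ball.

Lemma peval_det p v y1 y2 : peval p v y1 -> peval p v y2 -> y1 = y2.
Proof.
move=> /fev_complete [t1 H1] /fev_complete [t2 H2].
have := fev_mono (leq_maxl t1 t2) H1; rewrite (fev_mono (leq_maxr t1 t2) H2).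
by case.
Qed.

Lemma inv_final f q c y : peval (PComp f [:: PMu q; PProj 0]) [:: c] y ->
  exists n, peval q [:: n; c] 0 /\ peval f [:: n; c] y.
Proof.
move=> H; inversion H as [| | |f0 gs v ws y0 Hs Hf| | |]; subst.
inversion Hs as [|g gs0 v0 y1 ys Hg Hgs]; subst.
inversion Hgs as [|g1 gs1 v1 y2 ys2 Hg1 Hgs1]; subst.
inversion Hgs1; subst.
inversion Hg1; subst.
inversion Hg as [| | | | | |f1 v3 n Hn Hlt]; subst.
by exists y1.
Qed.

Section PiTR.
Variables (G : group) (k k' : nat) (gen : 'I_k -> G) (gen' : 'I_k' -> G).
Variable tau : letter k' -> seq (letter k).
Hypothesis Htau : forall x', piw gen (tau x') = gen_val gen' x'.
Lemma piw_TR w : piw gen (TRw tau w) = piw gen' w.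
Proof. by elim: w => //= x w IH; rewrite piw_F IH Htau. Qed.
End PiTR.

Theorem theoremA (G : group) :
  (exists (k : nat) (gen : 'I_k -> G), generating gen /\
     exists S : pred (seq (letter k)),
       generic S /\ EqP_solvable_on gen (fun w1 w2 => S w1 && S w2)) ->
  forall (k : nat) (gen : 'I_k -> G), generating gen -> WP_solvable gen.
Proof.
move=> [k [gen [[_ Hsurj] [S [HS [p [Htot Hcor]]]]]]] k' gen' _.
pose tau (x' : letter k') : seq (letter k) := proj1_sig (constructive_indefinite_description _ (Hsurj (gen_val gen' x'))).
have Htau : forall x', piw gen (tau x') = gen_val gen' x'.
  by move=> x'; exact: (proj2_sig (constructive_indefinite_description _ (Hsurj (gen_val gen' x')))).
exists (FINAL tau p); split.
- move=> w' Hred _.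
  set c := word_code w'.
  set Ww := TRw tau w'.
  have HWw : reduced Ww by apply: TRw_red.
  have HcW : TRc tau c = word_code Ww by rewrite -code_TR /c lets_code.
  have [u0 [Hu0 HSu0 HSF]] := generic_exists HS HWw.
  have [y0 Hy0] := Htot u0 (F u0 Ww) Hu0 (F_red _ HWw) (introT andP (conj HSu0 HSF)).
  have [t0 Ht0] := fev_complete Hy0.
  set m0 := word_code u0.
  have Hrun : forall t, t0 <= t -> run tau p m0 t c = y0.+1.
    move=> t Ht; rewrite /run HcW.
    rewrite -(code_FR m0 [::]) -(code_FR m0 Ww) /m0 lets_code F_nil //.
    exact: fev_mono Ht Ht0.
  set T := maxn t0 m0.+1.
  have HT : sv tau p T c != 0.
    apply: (sv_pos (m := m0)); first by rewrite leq_max leqnn orbT.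
    by rewrite Hrun // leq_maxl.
  have Hex : exists n, sv tau p n c != 0 by exists T.
  case: (ex_minnP Hex) => n Hn Hmin.
  exists (evalE (OUTE tau p) [:: n; c]).
  apply: ev_comp; last by apply: cE_ok.
  apply: evs_cons; last by apply: evs_cons; [apply: ev_proj | apply: evs_nil].
  apply: ev_mu.
  + have := cE_ok (QE tau p) (n := 2) (v := [:: n; c]) erefl.
    by rewrite ev_Q (negbTE Hn).
  + move=> m Hm; exists 1; split => //.
    have := cE_ok (QE tau p) (n := 2) (v := [:: m; c]) erefl.
    rewrite ev_Q; case: eqP => // /eqP Hm0.
    by have := Hmin m Hm0; rewrite leqNgt Hm.
- move=> w' y Hred Hev.
  set c := word_code w' in Hev.
  set Ww := TRw tau w'.
  have HWw : reduced Ww by apply: TRw_red.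
  have HcW : TRc tau c = word_code Ww by rewrite -code_TR /c lets_code.
  have [n [Hq Ho]] := inv_final Hev.
  have HQ := peval_det Hq (cE_ok (QE tau p) (n := 2) (v := [:: n; c]) erefl).
  have HO := peval_det Ho (cE_ok (OUTE tau p) (n := 2) (v := [:: n; c]) erefl).
  rewrite ev_Q in HQ; rewrite ev_OUT in HO.
  case Es: (sv tau p n c) HQ HO => [//|m] _ /= Hy.
  have Hr := sv_found Es.
  have Hrun : run tau p m n c = y.+1 by move: Hr Hy; case: (run _ _ _ _ _) => //= z _ ->.
  have Hp := fev_sound Hrun.
  rewrite /run HcW -(code_FR m [::]) -(code_FR m Ww) in Hp.
  have := Hcor _ _ _ (F_red _ (isT : reduced [::])) (F_red _ HWw) Hp.
  rewrite !piw_F (piw_TR Htau) gmul1r.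
  set a := piw gen (lets k m).
  move=> [[-> E]|[-> E]].
  + by left; split => //; apply: (gcancel E).
  + right; split => // E'; apply: E; by rewrite E' /= gmul1r.
Qed.
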